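(* Let $(\rho_n)_{n\ge1}$ with $\rho_n$ a probability measure on $\mathbb{Y}_n$. Then $(\rho_n)$ is LLN-appropriate if and only if there exist reals $(c_k)_{k\ge1}$ such that (1) for every cycle $\sigma\in S_\infty$ of length $k$, $\lim_n n^{|\sigma|/2}M_{\rho_n}(\sigma)=c_k$; and (2) for every $r\ge2$ and cycles $\sigma_1,\dots,\sigma_r\in S_\infty$ with pairwise disjoint supports, $\lim_n n^{(|\sigma_1|+\dots+|\sigma_r|)/2}\kappa_{\rho_n,r}(\sigma_1,\dots,\sigma_r)=0$.
   Context: $\mathbb{Y}_n$: partitions of $n$; $S_\infty=\bigcup_mS_m$; $|\sigma|$ is the minimal number of transpositions whose product is $\sigma$ (so a $k$-cycle has $|\sigma|=k-1$). $M_\rho(\sigma)=\sum_{\lambda\in\mathbb{Y}_n}\rho(\lambda)\chi_\lambda(\tau)/\dim\lambda$ if $\sigma$ is conjugate to some $\tau\in S_n$, else $0$ ($\chi_\lambda$ irreducible characters, $\dim\lambda=\chi_\lambda(e)$). Permutation-cumulant of permutations with disjoint supports: $\kappa_{\rho,r}(\sigma_1,\dots,\sigma_r)=\sum_{\pi}(-1)^{|\pi|-1}(|\pi|-1)!\prod_{B\in\pi}M_\rho(\prod_{j\in B}\sigma_j)$, over set partitions $\pi$ of $\{1,\dots,r\}$. Young generating function $A_\rho=\sum_{\vec i}M_\rho(\sigma_{\vec i})\prod_{k\ge1}n^{i_k(k-1)/2}x_k^{i_k}/i_k!$ over finitely supported $\vec i\in\mathbb{Z}_{\ge0}^{\mathbb{N}}$,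 $\sigma_{\vec i}$ any permutation with $i_k$ cycles of length $k$ for each $k\ge2$. $(\rho_n)$ is LLN-appropriate if for some reals $c_i$, $\lim_n\partial_i\ln A_{\rho_n}|_{\vec x=0}=c_i$ for all $i$ and all formal mixed derivatives of order $\ge2$ of $\ln A_{\rho_n}$ at $\vec x=0$ tend to $0$. *)

(* Defs.v *)
From mathcomp Require Import all_boot all_order all_algebra all_fingroup.
From mathcomp Require Import all_field all_character.
From mathcomp Require Import mpoly.
From mathcomp Require Import all_classical all_reals all_analysis.

Set Implicit Arguments.
Unset Strict Implicit.
Unset Printing Implicit Defensive.

Import Order.TTheory GRing.Theory Num.Theory.
Import numFieldNormedType.Exports.
Local Open Scope classical_set_scope.
Local Open Scope ring_scope.

(* Elements of S_infinity are represented as permutations s : 'S_m of some  *)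
(* finite 'I_m (S_m viewed inside S_infinity by fixing all points >= m).    *)

Definition ctype m (s : 'S_m) (k : nat) : nat :=
  #|[set X in porbits s | #|X| == k]|.

Definition ctseq m (s : 'S_m) : seq nat := [seq ctype s k | k <- iota 0 m.+1].

(* two cycle-type lists agree on all cycle lengths k >= 2
   (missing entries are 0); for permutations this is exactly
   conjugacy in S_infinity *)
Definition same_ct (s t : seq nat) : bool :=
  [forall k : 'I_(maxn (size s) (size t)),
     (1 < k)%N ==> (nth 0%N s k == nth 0%N t k)].

(* |s| = minimal number of transpositions = m - (number of cycles) *)
Definition perm_length m (s : 'S_m) : nat := (m - #|porbits s|)%N.

Definition psupp m (s : 'S_m) : {set 'I_m} := [set x | s x != x].

(* s is a cycle of length k (k = 1: the identity) *)
Definition is_cycle_of_length m (s : 'S_m) (k : nat) : Prop :=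
  forall j : nat, (1 < j)%N -> ctype s j = (j == k : nat).

(* irreducible characters of S_n (Iirr [set: 'S_n]); character values of S_n *)
(* are integers, which are transported to R via the floor.                  *)

Definition chiR {R : realType} n (i : Iirr [set: 'S_n]%G) (t : 'S_n) : R :=
  (Num.floor ('chi[ [set: 'S_n]%G ]_i t))%:~R.

Definition prob_on (R : realType) n (rho : Iirr [set: 'S_n]%G -> R) : Prop :=
  (forall i, 0 <= rho i) /\ \sum_i rho i = 1.

(* M_rho evaluated at the conjugacy class (in S_infinity) with cycle-type
   list ct; 0 if no element of S_n has that cycle type *)
Definition Mct (R : realType) n (rho : Iirr [set: 'S_n]%G -> R) (ct : seq nat)
  : R :=
  if [pick t : 'S_n | same_ct ct (ctseq t)] is Some t then
    \sum_i rho i * (chiR i t / chiR i 1)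
  else 0.

Definition Mrho (R : realType) n (rho : Iirr [set: 'S_n]%G -> R) m (s : 'S_m)
  : R := Mct rho (ctseq s).

Definition kappa (R : realType) n (rho : Iirr [set: 'S_n]%G -> R) r m
  (s : 'I_r -> 'S_m) : R :=
  \sum_(P : {set {set 'I_r}} | finset.partition P [set: 'I_r])
     ((-1) ^+ (#|P|.-1) * (#|P|.-1)`!%:R *
      \prod_(B in P) Mrho rho (\prod_(j in B) s j)%g).

(* Variable i : 'I_K of an mpoly in K variables stands for x_(i+1).         *)
(* For a multi-index a (on x_1..x_K) of total degree D, the formal          *)
(* derivative d^a ln A at 0 only involves the part of A of degree <= D in    *)
(* x_1..x_K, and ln A = sum_{j>=1} (-1)^(j-1) (A-1)^j / j where only j <= D *)
(* contributes (A(0) = M(e) = 1); we compute it from these truncations.     *)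

(* cycle-type list of sigma_m: m_(k-1) cycles of length k, for 1 <= k <= K *)
Definition ct_of_mnm K (a : mpoly.multinom K) : seq nat :=
  0%N :: tval (mpoly.multinom_val a).

(* part of degree <= D in x_1..x_K of A_rho (rho on Y_n) *)
Definition Atrunc (R : realType) n (rho : Iirr [set: 'S_n]%G -> R) K D
  : mpoly.mpoly K R :=
  \sum_(a : mpoly.bmultinom K D.+1)
     ((Mct rho (ct_of_mnm (mpoly.bmnm a)) *
       \prod_(i < K) (Num.sqrt (n%:R : R) ^+ (mpoly.bmnm a i * i)
                      / (mpoly.bmnm a i)`!%:R))
      *: mpoly.mpolyX R (mpoly.bmnm a)).

Definition logtrunc (R : realType) K D (p : mpoly.mpoly K R) : mpoly.mpoly K R :=
  \sum_(1 <= j < D.+1) (((-1) ^+ j.-1 / j%:R) *: (p - 1) ^+ j).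

Definition dlogA (R : realType) n (rho : Iirr [set: 'S_n]%G -> R) K
  (a : mpoly.multinom K) : R :=
  mpoly.meval (fun _ => 0)
    (mpoly.mderivm a (logtrunc (mpoly.mdeg a) (Atrunc rho K (mpoly.mdeg a)))).

Definition LLN_appropriate (R : realType)
  (rho : forall n : nat, Iirr [set: 'S_n]%G -> R) : Prop :=
  (exists c : nat -> R, forall k : nat,
      (fun n => dlogA (rho n) (mpoly.mnm1 (@ord_max k))) @ \oo --> (c k.+1 : R))
  /\ (forall (K : nat) (a : mpoly.multinom K), (2 <= mpoly.mdeg a)%N ->
      (fun n => dlogA (rho n) a) @ \oo --> (0 : R)).

Definition disjoint_supp m (s t : 'S_m) : bool :=
  fintype.disjoint (mem (psupp s)) (mem (psupp t)).

(* Main.v *)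
Require Import Defs.
From mathcomp Require Import all_boot all_order all_algebra all_fingroup.
From mathcomp Require Import all_field all_character.
From mathcomp Require Import mpoly.
From mathcomp Require Import all_classical all_reals all_analysis.
From mathcomp Require Import zify ring lra.
Import Order.TTheory GRing.Theory Num.Theory.
Import numFieldNormedType.Exports.
From mathcomp Require Import fintype finset.
Set Implicit Arguments.
Unset Strict Implicit.
Unset Printing Implicit Defensive.
Local Open Scope ring_scope.
Lemma card_setD_lt (r : nat) (S B : {set 'I_r}) :
  B \subset S -> B != set0 -> (#|S :\: B| < #|S|)%N.
Proof.
move=> BS B0; rewrite cardsD (setIidPr BS).
have : (0 < #|B|)%N by rewrite card_gt0.
have : (#|B| <= #|S|)%N by apply: subset_leq_card.
lia.
Qed.

Lemma O_big (R : realType) (r : nat) (G : {set 'I_r} -> R)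
  (O : nat -> {set 'I_r} -> R)
  (hO0 : forall S, O 0%N S = (S == set0)%:R)
  (hOS : forall j S, O j.+1 S = \sum_(B : {set 'I_r} | (B \subset S) && (B != set0)) G B * O j (S :\: B)) :
  forall j (S : {set 'I_r}), (#|S| < j)%N -> O j S = 0.
Proof.
elim=> [//|j IH] S hS; rewrite hOS big1 // => B /andP[BS B0].
rewrite IH ?mulr0 //; have := card_setD_lt BS B0; lia.
Qed.

Lemma setUD_sub (T : finType) (A B : {set T}) : A \subset B -> A :|: (B :\: A) = B.
Proof.
move=> /subsetP AB; apply/setP=> x; rewrite !inE.
by case: (boolP (x \in A)) => //= /AB ->.
Qed.

Lemma part_formula (R : realType) (r : nat) (G : {set 'I_r} -> R)
  (O : nat -> {set 'I_r} -> R)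
  (hO0 : forall S, O 0%N S = (S == set0)%:R)
  (hOS : forall j S, O j.+1 S = \sum_(B : {set 'I_r} | (B \subset S) && (B != set0)) G B * O j (S :\: B)) :
  forall (S : {set 'I_r}) (h : nat -> R),
  \sum_(P : {set {set 'I_r}} | partition P S) h #|P| * \prod_(B in P) G B
  = \sum_(j < r.+1) h j / (j`!)%:R * O j S.
Proof.
have Obig := O_big hO0 hOS.
suff H : forall n (S : {set 'I_r}), (#|S| < n)%N -> forall h : nat -> R,
  \sum_(P : {set {set 'I_r}} | partition P S) h #|P| * \prod_(B in P) G B
  = \sum_(j < r.+1) h j / (j`!)%:R * O j S.
  by move=> S; apply: (H #|S|.+1).
elim=> [//|n IH] S hS h.
have [->|S0] := eqVneq S set0.
  rewrite (big_pred1 set0); last by move=> P; rewrite partition_set0.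
  rewrite big_ord_recl [X in _ = _ + X]big1; last first.
    by move=> j _; rewrite Obig ?mulr0 // cards0.
  by rewrite big_set0 cards0 hO0 eqxx fact0 !mulr1 divr1 addr0.
have Sle : (#|S| <= r)%N by rewrite -[X in (_ <= X)%N]card_ord max_card.
transitivity (\sum_(P : {set {set 'I_r}} | partition P S) \sum_(B in P)
   (h #|P| / #|P|%:R) * (G B * \prod_(B' in P | B' != B) G B')).
  apply: eq_bigr => P hP.
  have P0 : (0 < #|P|)%N.
    rewrite card_gt0; apply: contraNneq S0 => P0.
    by rewrite -(cover_partition hP) P0 /cover big_set0.
  rewrite [RHS](eq_bigr (fun B => h #|P| / #|P|%:R * \prod_(B' in P) G B')); last first.
    by move=> B BP; rewrite [in RHS](bigD1 B).
  rewrite sumr_const.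
  have -> : forall x : R, x *+ #|P| = x * #|P|%:R by move=> x; rewrite mulr_natr.
  rewrite mulrAC divfK //.
  by rewrite pnatr_eq0 -lt0n.
rewrite (exchange_big_dep (fun B : {set 'I_r} => (B \subset S) && (B != set0))) /=; last first.
  move=> P B hP BP; apply/andP; split; first exact: partitionS hP BP.
  exact: partition_neq0 hP BP.
transitivity (\sum_(B : {set 'I_r} | (B \subset S) && (B != set0))
   G B * \sum_(j < r.+1) (h j.+1 / j.+1%:R) / (j`!)%:R * O j (S :\: B)).
  apply: eq_bigr => B /andP[BS B0].
  have hlt : (#|S :\: B| < n)%N by have := card_setD_lt BS B0; lia.
  rewrite -(IH _ hlt (fun j => h j.+1 / j.+1%:R)).
  rewrite mulr_sumr.
  rewrite (reindex_onto (fun P' => B |: P') (fun P => P :\ B)); last first.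
    by move=> P /andP[_ BP]; rewrite setD1K.
  apply: eq_big => P'.
    apply/idP/idP.
      move=> /andP[/andP[hP _] /eqP <-]; apply: partitionD1 hP _.
      by rewrite setU11.
    move=> hP'.
    have BP' : B \notin P'.
      apply/negP => BP'; have := partitionS hP' BP'.
      move=> /subsetP sub; move/set0Pn: B0 => [x xB].
      by have := sub x xB; rewrite inE xB.
    rewrite setU11 setU1K // eqxx !andbT.
    rewrite -[X in partition _ X](setUD_sub BS); apply: partitionU1 => //.
    by rewrite disjoints_subset; apply/subsetP => x xB; rewrite !inE xB.
  move=> /andP[/andP[hP _] /eqP eqP'].
  have BP' : B \notin P' by rewrite -eqP' setD11.
  rewrite cardsU1 BP' add1n.
  rewrite (eq_bigl (fun B' => B' \in P')); last first.
    move=> B'; rewrite in_setU1; case: (eqVneq B' B) => [->|_] /=.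
      by rewrite (negbTE BP').
    by rewrite andbT.
  by rewrite mulrCA.
rewrite (eq_bigr (fun B => \sum_(j < r.+1) h j.+1 / j.+1%:R / (j`!)%:R * (G B * O j (S :\: B)))); last first.
  by move=> B _; rewrite mulr_sumr; apply: eq_bigr => j _; rewrite mulrCA.
rewrite exchange_big /=.
rewrite (eq_bigr (fun j : 'I_r.+1 => h j.+1 / j.+1%:R / (j`!)%:R * O j.+1 S)); last first.
  by move=> j _; rewrite -mulr_sumr hOS.
rewrite big_ord_recr /= Obig ?mulr0 ?addr0; last by lia.
rewrite [RHS]big_ord_recl /= hO0 (negbTE S0) mulr0 add0r.
apply: eq_bigr => j _; congr (_ * _).
by rewrite /bump /= add1n factS natrM invfM mulrA.
Qed.
Definition tc K r (c : 'I_r -> 'I_K) (S : {set 'I_r}) : 'X_{1..K} :=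
  [multinom #|[set j in S | c j == i]| | i < K].

Lemma tcE K r (c : 'I_r -> 'I_K) (S : {set 'I_r}) i : tc c S i = #|[set j in S | c j == i]|.
Proof. by rewrite /tc mnmE. Qed.

Lemma tc0 K r (c : 'I_r -> 'I_K) : tc c set0 = 0%MM.
Proof.
apply/mnmP => i; rewrite tcE mnm0E; apply/eqP; rewrite cards_eq0; apply/eqP.
by apply/setP => j; rewrite !inE.
Qed.

Lemma tcU K r (c : 'I_r -> 'I_K) (S : {set 'I_r}) z : z \notin S ->
  tc c (z |: S) = (tc c S + U_(c z))%MM.
Proof.
move=> zS; apply/mnmP => i; rewrite mnmDE mnm1E !tcE.
have -> : [set j in z |: S | c j == i] =
   if c z == i then z |: [set j in S | c j == i] else [set j in S | c j == i].
  apply/setP => j; rewrite !inE; case: (eqVneq (c z) i) => czi; rewrite ?inE;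
  case: (eqVneq j z) => [->|] //=; rewrite ?czi ?eqxx //.
  by rewrite (negbTE czi) andbF.
case: (eqVneq (c z) i) => _; rewrite ?addn0 // cardsU1 inE (negbTE zS) /=.
by rewrite addnC.
Qed.

Lemma mdeg_tc K r (c : 'I_r -> 'I_K) (S : {set 'I_r}) : mdeg (tc c S) = #|S|.
Proof.
rewrite mdegE (eq_bigr (fun i => \sum_(j in S | c j == i) 1)%N); last first.
  by move=> i _; rewrite tcE -sum1_card; apply: eq_bigl => j; rewrite inE.
rewrite -(partition_big c xpredT) //= sum1_card.
by [].
Qed.

Lemma tc_eq0 K r (c : 'I_r -> 'I_K) (S : {set 'I_r}) : (tc c S == 0%MM) = (S == set0).
Proof. by rewrite -mdeg_eq0 mdeg_tc cards_eq0. Qed.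

Lemma meval0E (R : realType) K (q : {mpoly R[K]}) : meval (fun _ => 0) q = q@_0.
Proof.
rewrite mevalE [in RHS](mpolyE q) raddf_sum /=; apply: eq_bigr => m _.
rewrite mcoeffZ mcoeffX; congr (_ * _).
case: (eqVneq m 0%MM) => [->|m0].
  by rewrite big1 // => i _; rewrite mnm0E expr0.
have [i mi] : exists i, m i != 0%N.
  apply/existsP; rewrite -negb_forall; apply: contra m0 => /forallP H.
  by apply/eqP/mnmP => i; rewrite mnm0E; apply/eqP; apply: H.
by rewrite (bigD1 i) //= expr0n (negbTE mi) mul0r.
Qed.

Lemma W_coef (R : realType) K (m : 'X_{1..K}) (q : {mpoly R[K]}) :
  meval (fun _ => 0) (mderivm m q) = (\prod_(i < K) (m i)`!)%:R * q@_m.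
Proof.
rewrite meval0E mcoeff_mderivm addm0 mulr_natl.
by rewrite (eq_bigr (fun i => (m i)`!)) // => i _; rewrite ffactnn.
Qed.

Lemma setU1D_U1 (T : finType) (S B : {set T}) z : z \notin S ->
  (z |: S) :\: (z |: B) = S :\: B.
Proof.
move=> zS; apply/setP => x; rewrite !inE; case: (eqVneq x z) => [->|] //=.
by rewrite (negbTE zS) andbF.
Qed.

Lemma setU1D (T : finType) (S B : {set T}) z : z \notin B ->
  (z |: S) :\: B = z |: (S :\: B).
Proof.
move=> zB; apply/setP => x; rewrite !inE; case: (eqVneq x z) => [->|] //=.
by rewrite zB.
Qed.

Lemma leibniz_step (R : realType) K r (c : 'I_r -> 'I_K) (p q : {mpoly R[K]})
  (S : {set 'I_r}) z (zS : z \notin S)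
  (IH : mderivm (tc c S) (p * q) = \sum_(B : {set 'I_r} | B \subset S)
          mderivm (tc c B) p * mderivm (tc c (S :\: B)) q) :
  mderivm (tc c (z |: S)) (p * q) = \sum_(B : {set 'I_r} | B \subset z |: S)
          mderivm (tc c B) p * mderivm (tc c ((z |: S) :\: B)) q.
Proof.
rewrite tcU // mderivmDm mderivmU1m IH raddf_sum /=.
rewrite (eq_bigr (fun B => mderivm (tc c (z |: B)) p * mderivm (tc c (S :\: B)) q
   + mderivm (tc c B) p * mderivm (tc c (z |: (S :\: B))) q)); last first.
  move=> B BS; have zB : z \notin B by apply: contra zS; apply: (subsetP BS).
  rewrite mderivM !tcU ?mderivmDm ?mderivmU1m //.
  by rewrite !inE (negbTE zS) andbF.
rewrite big_split /= [RHS](bigID (fun B : {set 'I_r} => z \in B)) /=; congr (_ + _).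
  rewrite [RHS](reindex_onto (fun B => z |: B) (fun B => B :\ z)) /=; last first.
    by move=> B /andP[_ zB]; rewrite setD1K.
  apply: eq_big => B.
    apply/idP/idP.
      move=> BS; have zB : z \notin B by apply: contra zS; apply: (subsetP BS).
      by rewrite setU11 setU1K // eqxx andbT setUS.
    move=> /andP[/andP[sub _] /eqP eqB].
    have zB : z \notin B by rewrite -eqB setD11.
    apply/subsetP => x xB.
    have := subsetP sub x; rewrite !inE xB orbT => /(_ isT) /orP[/eqP xz|//].
    by move: zB; rewrite -xz xB.
  by move=> _; rewrite setU1D_U1.
apply: eq_big => B.
  apply/idP/idP.
    move=> BS; have zB : z \notin B by apply: contra zS; apply: (subsetP BS).
    rewrite zB andbT; apply/subsetP => x xB; rewrite inE (subsetP BS) ?orbT //.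
  move=> /andP[sub zB]; apply/subsetP => x xB.
  have := subsetP sub x xB; rewrite !inE; case: (eqVneq x z) => [xz|] //=.
  by move: zB; rewrite -xz xB.
move=> BS; have zB : z \notin B by apply: contra zS; apply: (subsetP BS).
by rewrite setU1D.
Qed.

Lemma leibniz (R : realType) K r (c : 'I_r -> 'I_K) (p q : {mpoly R[K]})
  (S : {set 'I_r}) :
  mderivm (tc c S) (p * q) = \sum_(B : {set 'I_r} | B \subset S)
          mderivm (tc c B) p * mderivm (tc c (S :\: B)) q.
Proof.
suff H : forall n (S : {set 'I_r}), #|S| = n ->
  mderivm (tc c S) (p * q) = \sum_(B : {set 'I_r} | B \subset S)
          mderivm (tc c B) p * mderivm (tc c (S :\: B)) q by exact: H.
elim=> [|n IH] {}S hS.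
  move/eqP: hS; rewrite cards_eq0 => /eqP ->.
  rewrite (big_pred1 set0); last by move=> B; rewrite subset0.
  by rewrite setD0 tc0 !mderivm0m.
have [z zS] : exists z, z \in S.
  by apply/set0Pn; rewrite -card_gt0 hS.
rewrite -(setD1K zS); apply: leibniz_step; first by rewrite setD11.
by apply: IH; rewrite (cardsD1 z S) zS in hS; move: hS => [].
Qed.

Definition gfun (R : realType) n (rho : Iirr [set: 'S_n]%G -> R) K (x : 'X_{1..K}) : R :=
  Mct rho (ct_of_mnm x) * \prod_(i < K) Num.sqrt (n%:R : R) ^+ (x i * i).

Lemma Atrunc_coef (R : realType) n (rho : Iirr [set: 'S_n]%G -> R) K D (x : 'X_{1..K}) :
  (mdeg x <= D)%N ->
  (Atrunc rho K D)@_x = Mct rho (ct_of_mnm x) *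
     \prod_(i < K) (Num.sqrt (n%:R : R) ^+ (x i * i) / (x i)`!%:R).
Proof.
move=> hx; have hx' : (mdeg x < D.+1)%N by [].
rewrite /Atrunc raddf_sum /= (bigD1 (BMultinom hx')) //= mcoeffZ mcoeffX eqxx mulr1.
rewrite [X in _ + X]big1 ?addr0 // => a ne; rewrite mcoeffZ mcoeffX.
by move: ne; rewrite bmeqP /= => /negbTE ->; rewrite mulr0.
Qed.

Lemma W_Atrunc (R : realType) n (rho : Iirr [set: 'S_n]%G -> R) K D (x : 'X_{1..K}) :
  (mdeg x <= D)%N ->
  meval (fun _ => 0) (mderivm x (Atrunc rho K D)) = gfun rho x.
Proof.
move=> hx; rewrite W_coef Atrunc_coef // /gfun mulrCA; congr (_ * _).
rewrite natr_prod -big_split /=; apply: eq_bigr => i _.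
by rewrite mulrCA divff ?mulr1 // pnatr_eq0 -lt0n fact_gt0.
Qed.

Lemma dlogA_partition (R : realType) n (rho : Iirr [set: 'S_n]%G -> R) K r
  (c : 'I_r -> 'I_K) (r0 : (0 < r)%N)
  (hM1 : Mct rho (ct_of_mnm (0%MM : 'X_{1..K})) = 1) :
  dlogA rho (tc c setT) =
  \sum_(P : {set {set 'I_r}} | partition P setT)
     ((-1) ^+ (#|P|.-1) * (#|P|.-1)`!%:R * \prod_(B in P) gfun rho (tc c B)).
Proof.
set A := Atrunc rho K r.
pose O j (S : {set 'I_r}) := meval (fun _ => 0) (mderivm (tc c S) ((A - 1) ^+ j)).
have hO0 : forall S, O 0%N S = (S == set0)%:R.
  move=> S; rewrite /O expr0 W_coef mcoeff1 tc_eq0.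
  case: (eqVneq S set0) => [->|]; last by rewrite mulr0.
  by rewrite tc0 big1 ?mulr1 // => i _; rewrite mnm0E.
have hOS : forall j S, O j.+1 S = \sum_(B : {set 'I_r} | (B \subset S) && (B != set0))
    gfun rho (tc c B) * O j (S :\: B).
  move=> j S; rewrite /O exprS leibniz raddf_sum /=.
  rewrite (bigD1 set0) ?sub0set //= mevalM mderivmB mevalB W_Atrunc; last first.
    by rewrite mdeg_tc cards0.
  rewrite W_coef mcoeff1 tc0 eqxx /gfun hM1 big1 ?mul1r; last first.
    by move=> i _; rewrite mnm0E mul0n expr0.
  rewrite big1 ?mulr1 ?subrr ?mul0r ?add0r; last by move=> i _; rewrite mnm0E.
  apply: eq_bigr => B /andP[BS B0].
  rewrite mevalM mderivmB mevalB W_Atrunc; last first.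
    by rewrite mdeg_tc -[X in (_ <= X)%N]card_ord max_card.
  by rewrite (W_coef (tc c B) 1) mcoeff1 tc_eq0 (negbTE B0) mulr0 subr0.
rewrite (part_formula hO0 hOS setT (fun j => (-1) ^+ j.-1 * (j.-1)`!%:R)).
have T0 : ([set: 'I_r] == set0) = false.
  by apply/negbTE/set0Pn; exists (Ordinal r0); rewrite inE.
rewrite big_ord_recl hO0 T0 /= mulr0 add0r.
rewrite /dlogA mdeg_tc cardsT card_ord /logtrunc -/A.
rewrite raddf_sum raddf_sum /= big_add1 /= big_mkord.
apply: eq_bigr => j _; rewrite mderivmZ mevalZ /bump /= add1n.
rewrite !add0n /O.
suff -> : (-1) ^+ j * j`!%:R / (j.+1)`!%:R = (-1) ^+ j / j.+1%:R :> R by [].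
rewrite factS natrM invfM; field.
rewrite pnatr_eq0 -lt0n fact_gt0 andbT.
by rewrite (_ : 1 + j%:R = j.+1%:R) ?pnatr_eq0 // -addn1 natrD addrC.
Qed.

Lemma iter_fix (T : finType) (u : {perm T}) x i : u x = x -> iter i u x = x.
Proof. by move=> ux; elim: i => //= i ->. Qed.

Lemma porbit_fix (T : finType) (u : {perm T}) x : u x = x -> porbit u x = [set x].
Proof.
move=> ux; apply/setP => y; rewrite inE; apply/porbitP/eqP => [[i ->]|->].
  by rewrite permX iter_fix.
by exists 0%N; rewrite expg0 perm1.
Qed.

Lemma porbit_card1 (T : finType) (u : {perm T}) x :
  (#|porbit u x| == 1%N) = (u x == x).
Proof.
apply/idP/eqP => [/cards1P [y hy]|/porbit_fix ->]; last by rewrite cards1.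
have h1 : x \in porbit u x by exact: porbit_id.
have h2 : u x \in porbit u x by have := mem_porbit u 1 x; rewrite expg1.
by move: h1 h2; rewrite hy !inE => /eqP -> /eqP.
Qed.

Lemma porbits_partition (T : finType) (u : {perm T}) :
  partition (porbits u) [set: T].
Proof.
apply/and3P; split.
- apply/eqP/setP => x; rewrite inE; apply/bigcupP; exists (porbit u x).
    by apply: imset_f.
  exact: porbit_id.
- apply/trivIsetP => A B /imsetP[x _ ->] /imsetP[y _ ->] neq.
  rewrite -setI_eq0; apply/eqP/setP => z; rewrite !inE.
  apply/negbTE; apply: contra neq => /andP[zx zy].
  by rewrite -(eqP (_ : porbit u z == porbit u x)) ?eq_porbit_mem //
     (eqP (_ : porbit u z == porbit u y)) ?eq_porbit_mem.
- apply/imsetP => -[x _ /esym/eqP]; rewrite -cards_eq0.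
  by rewrite (negbTE (card_porbit_neq0 _ _)).
Qed.

Lemma ctype_big m (s : 'S_m) k : (m < k)%N -> ctype s k = 0%N.
Proof.
move=> mk; apply/eqP; rewrite cards_eq0; apply/eqP/setP => X; rewrite !inE.
apply/negbTE; apply/negP => /andP[_ /eqP XK].
have := max_card X; rewrite card_ord XK; lia.
Qed.

Lemma perm_lengthE m (s : 'S_m) :
  perm_length s = (\sum_(j < m.+1) j.-1 * ctype s j)%N.
Proof.
rewrite /perm_length.
have hm : m = (\sum_(X in porbits s) #|X|)%N.
  by rewrite -(card_partition (porbits_partition s)) cardsT card_ord.
have hpos : forall X, X \in porbits s -> (0 < #|X|)%N.
  by move=> X /imsetP[x _ ->]; rewrite lt0n card_porbit_neq0.
have hle : forall X : {set 'I_m}, (#|X| <= m)%N.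
  by move=> X; rewrite -[X in (_ <= X)%N]card_ord max_card.
have -> : (m - #|porbits s| = \sum_(X in porbits s) (#|X|).-1)%N.
  have e : (\sum_(X in porbits s) #|X| = \sum_(X in porbits s) ((#|X|).-1 + 1))%N.
    by apply: eq_bigr => X hX; rewrite addn1 prednK // hpos.
  rewrite {1}hm -sum1_card e.
  by rewrite big_split /= addnK.
rewrite (partition_big (fun X : {set 'I_m} => (inord #|X| : 'I_m.+1)) xpredT) //=.
apply: eq_bigr => j _.
rewrite /ctype -sum1_card big_distrr /= muln1.
apply: eq_big => X; last first.
  by case/andP => _ /eqP hj; subst j; rewrite inordK // ltnS.
rewrite !inE; congr (_ && _); apply/eqP/eqP => hj.
  by rewrite -hj inordK // ltnS.
by apply: val_inj; rewrite /= inordK ?hj // ltnS.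
Qed.

Lemma porbit_eq_on (T : finType) (u v : {perm T}) (A : {set T}) x :
  (forall y, y \in A -> u y = v y /\ v y \in A) -> x \in A ->
  porbit u x = porbit v x.
Proof.
move=> H xA.
have hi : forall i, iter i u x = iter i v x /\ iter i v x \in A.
  elim=> [|i [IH1 IH2]] //=; rewrite IH1; exact: H.
apply/setP => y; apply/porbitP/porbitP => -[i ->]; exists i; rewrite !permX;
  by case: (hi i).
Qed.

Lemma psuppP m (u : 'S_m) x : (x \in psupp u) = (u x != x).
Proof. by rewrite inE. Qed.

Lemma psupp_stable m (u : 'S_m) x : x \in psupp u -> u x \in psupp u.
Proof. by rewrite !psuppP; apply: contra => /eqP /perm_inj ->. Qed.

Lemma porbits_moved m (u : 'S_m) X : X \in porbits u -> #|X| != 1%N ->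
  exists2 x, x \in psupp u & X = porbit u x.
Proof.
move=> /imsetP[x _ ->] h; exists x => //.
by rewrite psuppP -porbit_card1.
Qed.

Lemma ctype_mul m (s t : 'S_m) k : disjoint_supp s t -> (1 < k)%N ->
  ctype (s * t)%g k = (ctype s k + ctype t k)%N.
Proof.
rewrite /disjoint_supp => dis k1.
have fixt : forall y, y \in psupp s -> t y = y.
  move=> y ys; apply/eqP; apply: contraFT (disjointFr dis ys) => h.
  by rewrite psuppP.
have fixs : forall y, y \in psupp t -> s y = y.
  move=> y yt; apply/eqP; apply: contraFT (disjointFl dis yt) => h.
  by rewrite psuppP.
have key_s : forall x, x \in psupp s -> porbit (s * t)%g x = porbit s x.
  move=> x xs; apply: (porbit_eq_on (A := psupp s)) => // y ys.
  by rewrite permM fixt ?psupp_stable //; split => //; apply: psupp_stable.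
have key_t : forall x, x \in psupp t -> porbit (s * t)%g x = porbit t x.
  move=> x xt; apply: (porbit_eq_on (A := psupp t)) => // y yt.
  by rewrite permM fixs //; split => //; apply: psupp_stable.
have k1' : k != 1%N by case: k k1 => [|[|]].
rewrite /ctype.
have -> : [set X in porbits (s * t)%g | #|X| == k] =
    [set X in porbits s | #|X| == k] :|: [set X in porbits t | #|X| == k].
  apply/setP => X; rewrite !inE.
  case: (eqVneq #|X| k) => [Xk|]; rewrite ?andbF //= !andbT.
  have X1 : #|X| != 1%N by rewrite Xk.
  apply/idP/idP.
    move=> /porbits_moved /(_ X1) [x xst ->].
    have : (x \in psupp s) || (x \in psupp t).
      apply: contraLR xst; rewrite negb_or !psuppP !negbK => /andP[/eqP h1 /eqP h2].
      by rewrite permM h1 h2.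
    case/orP => [xs|xt].
      by rewrite key_s // imset_f.
    by rewrite key_t // imset_f ?orbT.
  case/orP => /porbits_moved /(_ X1) [x xs ->].
    by rewrite -key_s // imset_f.
  by rewrite -key_t // imset_f.
rewrite cardsU.
suff -> : [set X in porbits s | #|X| == k] :&: [set X in porbits t | #|X| == k] = set0.
  by rewrite cards0 subn0.
apply/setP => X; rewrite !inE; apply/negbTE/negP => /andP[/andP[Xs Xk] /andP[Xt _]].
have X1 : #|X| != 1%N by rewrite (eqP Xk).
have [x xs eX] := porbits_moved Xs X1.
have [y yt eY] := porbits_moved Xt X1.
have xt : x \in psupp t.
  have xY : x \in porbit t y by rewrite -eY eX porbit_id.
  rewrite psuppP -porbit_card1.
  by move: X1; rewrite eY; rewrite -(eqP (_ : porbit t x == porbit t y)) ?eq_porbit_mem.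
by move: (disjointFr dis xs); rewrite xt.
Qed.

Lemma ctype1 m k : (1 < k)%N -> ctype (1%g : 'S_m) k = 0%N.
Proof.
move=> k1; apply/eqP; rewrite cards_eq0; apply/eqP/setP => X; rewrite !inE.
apply/negbTE/negP => /andP[/imsetP[x _ ->] /eqP hk].
move: (porbit_card1 (1%g : 'S_m) x); rewrite perm1 eqxx hk.
by case: k k1 {hk} => [|[|]].
Qed.

Lemma psupp_mul m (s t : 'S_m) : psupp (s * t)%g \subset psupp s :|: psupp t.
Proof.
apply/subsetP => x; rewrite !inE permM; apply: contraR.
by rewrite negb_or !negbK => /andP[/eqP -> /eqP ->].
Qed.

Lemma psupp1 m : psupp (1%g : 'S_m) = set0.
Proof. by apply/setP => x; rewrite !inE perm1 eqxx. Qed.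

Lemma psupp_prod m r (s : 'I_r -> 'S_m) (l : seq 'I_r) (P : pred 'I_r) x :
  x \in psupp (\prod_(j <- l | P j) s j)%g -> exists2 j, j \in l & x \in psupp (s j).
Proof.
elim: l => [|a l IH]; first by rewrite big_nil psupp1 inE.
rewrite big_cons; case: (P a) => hx.
  move: (subsetP (psupp_mul _ _) x hx); rewrite inE => /orP[xa|xl].
    by exists a; rewrite ?mem_head.
  by have [j jl xj] := IH xl; exists j; rewrite // inE jl orbT.
by have [j jl xj] := IH hx; exists j; rewrite // inE jl orbT.
Qed.

Lemma ctype_prod_seq m r (s : 'I_r -> 'S_m)
  (hdis : forall i j, i != j -> disjoint_supp (s i) (s j)) k (k1 : (1 < k)%N)
  (l : seq 'I_r) (P : pred 'I_r) : uniq l ->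
  ctype (\prod_(j <- l | P j) s j)%g k = (\sum_(j <- l | P j) ctype (s j) k)%N.
Proof.
elim: l => [|a l IH]; first by rewrite !big_nil ctype1.
move=> /andP[al ul]; rewrite !big_cons; case: (P a); last exact: IH.
rewrite ctype_mul ?IH //.
rewrite /disjoint_supp disjoints_subset; apply/subsetP => x xa; rewrite inE.
apply/negP => xl; have [j jl xj] := psupp_prod xl.
have aj : a != j by apply: contraNneq al => ->.
by move: (disjointFr (hdis _ _ aj) xa); rewrite xj.
Qed.

Lemma ctype_prod m r (s : 'I_r -> 'S_m)
  (hdis : forall i j, i != j -> disjoint_supp (s i) (s j)) k (k1 : (1 < k)%N)
  (B : {set 'I_r}) :
  ctype (\prod_(j in B) s j)%g k = (\sum_(j in B) ctype (s j) k)%N.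
Proof. by apply: ctype_prod_seq => //; apply: index_enum_uniq. Qed.

Lemma same_ctP (s t : seq nat) :
  reflect (forall k, (1 < k)%N -> nth 0%N s k = nth 0%N t k) (same_ct s t).
Proof.
apply: (iffP forallP) => [H k k1|H k].
  case: (ltnP k (maxn (size s) (size t))) => hk.
    by move: (H (Ordinal hk)) => /= /implyP /(_ k1) /eqP.
  move: hk; rewrite geq_max => /andP[hs ht].
  by rewrite !nth_default.
by apply/implyP => k1; rewrite H.
Qed.

Lemma Mct_ext (R : realType) n (rho : Iirr [set: 'S_n]%G -> R) (s t : seq nat) :
  (forall k, (1 < k)%N -> nth 0%N s k = nth 0%N t k) -> Mct rho s = Mct rho t.
Proof.
move=> H; rewrite /Mct (eq_pick (Q := fun u : 'S_n => same_ct t (ctseq u))) //.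
move=> u /=; apply/same_ctP/same_ctP => H' k k1; first by rewrite -H // H'.
by rewrite H // H'.
Qed.

Lemma nth_ctseq m (u : 'S_m) k : nth 0%N (ctseq u) k = ctype u k.
Proof.
case: (ltnP m k) => mk.
  by rewrite nth_default ?ctype_big // size_map size_iota.
by rewrite (nth_map 0%N) ?size_iota ?ltnS // nth_iota ?ltnS.
Qed.

Lemma nth_ct_of_mnm K (x : 'X_{1..K}) (i : 'I_K) : nth 0%N (ct_of_mnm x) i.+1 = x i.
Proof. by rewrite /ct_of_mnm /= mnm_tnth (tnth_nth 0%N). Qed.

Lemma nth_ct_of_mnm_big K (x : 'X_{1..K}) k : (K <= k)%N -> nth 0%N (ct_of_mnm x) k.+1 = 0%N.
Proof. by move=> Kk; rewrite /ct_of_mnm /= nth_default // size_tuple. Qed.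

Lemma perm_ctype0 m (t : 'S_m) : (forall k, (1 < k)%N -> ctype t k = 0%N) -> t = 1%g.
Proof.
move=> H; apply/permP => x; rewrite perm1; apply/eqP/negPn/negP => hx.
have c1 : #|porbit t x| != 1%N by rewrite porbit_card1.
have c0 := card_porbit_neq0 t x.
have : ctype t #|porbit t x| = 0%N.
  by apply: H; case: #|porbit t x| c1 c0 => [|[|]].
move/eqP; rewrite cards_eq0 => /eqP/setP/(_ (porbit t x)).
by rewrite !inE imset_f // eqxx.
Qed.

Lemma chiR1_neq0 (R : realType) n (i : Iirr [set: 'S_n]%G) : (chiR i 1%g : R) != 0.
Proof.
rewrite /chiR intr_eq0 floor_neq0; apply/orP; right.
move: (Cnat_irr1 i) => /natrP [k hk]; move: (irr1_gt0 i); rewrite hk ltr0n => k0.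
by rewrite ler1n.
Qed.

Lemma Mct_one (R : realType) n (rho : Iirr [set: 'S_n]%G -> R) (hp : prob_on rho)
  (ct : seq nat) : (forall k, (1 < k)%N -> nth 0%N ct k = 0%N) -> Mct rho ct = 1.
Proof.
move=> H; rewrite /Mct; case: pickP => [t /same_ctP ht|hnone].
  have -> : t = 1%g.
    apply: perm_ctype0 => k k1; by rewrite -nth_ctseq -ht // H.
  case: hp => _ <-; apply: eq_bigr => i _.
  by rewrite divff ?mulr1 // chiR1_neq0.
move: (hnone 1%g) => /same_ctP []; move=> k k1.
by rewrite H // nth_ctseq ctype1.
Qed.

Lemma pl_cycle m (u : 'S_m) k : is_cycle_of_length u k -> (0 < k)%N ->
  perm_length u = k.-1.
Proof.
move=> hc k0; rewrite perm_lengthE.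
rewrite (eq_bigr (fun j : 'I_m.+1 => if nat_of_ord j == k then k.-1 else 0%N)); last first.
  move=> j _; case: (ltnP 1 j) => j1.
    by rewrite hc //; case: eqP => [->|]; rewrite ?muln1 ?muln0.
  case: eqP => [<-|_]; last by case: (nat_of_ord j) j1 => [|[|]].
  by case: (nat_of_ord j) j1 => [|[|]] //=; rewrite mul0n.
case: (ltnP 1 k) => k1.
  have km : (k < m.+1)%N.
    rewrite ltnS; case: (leqP k m) => // mk.
    by move: (hc k k1); rewrite ctype_big // eqxx.
  rewrite (bigD1 (Ordinal km)) //= eqxx big1 ?addn0 // => j.
  by rewrite -val_eqE /= => /negbTE ->.
have k1' : k = 1%N by lia.
rewrite big1 //; last by move=> j _; case: eqP => // _; rewrite k1'.
by rewrite k1'.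
Qed.

Lemma core_identity (R : realType) n (rho : Iirr [set: 'S_n]%G -> R)
  (hp : prob_on rho) r (r0 : (0 < r)%N) m (s : 'I_r -> 'S_m) K (c : 'I_r -> 'I_K)
  (hcyc : forall j, is_cycle_of_length (s j) (c j).+1)
  (hdis : forall i j, i != j -> disjoint_supp (s i) (s j)) :
  dlogA rho (tc c setT) =
  Num.sqrt (n%:R : R) ^+ (\sum_j perm_length (s j)) * kappa rho s.
Proof.
have hM1 : Mct rho (ct_of_mnm (0%MM : 'X_{1..K})) = 1.
  apply: Mct_one => // -[|k] // k1; case: (ltnP k K) => kK.
    by rewrite (nth_ct_of_mnm _ (Ordinal kK)) mnm0E.
  by rewrite nth_ct_of_mnm_big.
have hpl : forall j, perm_length (s j) = c j.
  by move=> j; rewrite (pl_cycle (hcyc j)).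
set sq := Num.sqrt (n%:R : R).
have hg : forall B : {set 'I_r}, gfun rho (tc c B) =
    sq ^+ (\sum_(j in B) perm_length (s j)) * Mrho rho (\prod_(j in B) s j)%g.
  move=> B; rewrite /gfun mulrC; congr (_ * _).
    rewrite prodrXr; congr (_ ^+ _).
    rewrite (eq_bigr (fun j => nat_of_ord (c j))); last by move=> j _; rewrite hpl.
    rewrite (partition_big c xpredT) //=; apply: eq_bigr => i _.
    rewrite tcE -sum1_card big_distrl /= mul1n; apply: eq_big => j.
      by rewrite inE.
    by rewrite inE => /andP[_ /eqP ->].
  rewrite /Mrho; apply: Mct_ext => -[|k] // k1.
  rewrite nth_ctseq (ctype_prod hdis k1).
  rewrite (eq_bigr (fun j => (c j == k :> nat) : nat)); last first.
    by move=> j _; rewrite hcyc // eqSS eq_sym.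
  case: (ltnP k K) => kK.
    rewrite (nth_ct_of_mnm _ (Ordinal kK)) tcE -sum1_card.
    rewrite [LHS]big_mkcond [RHS]big_mkcond /=; apply: eq_bigr => j _.
    by rewrite !inE -val_eqE /=; case: (j \in B).
  rewrite nth_ct_of_mnm_big // big1 // => j _.
  by case: eqP => // hk; move: (ltn_ord (c j)); rewrite hk; lia.
rewrite dlogA_partition // /kappa mulr_sumr; apply: eq_bigr => P hP.
rewrite mulrCA; congr (_ * _).
rewrite (eq_bigr _ (fun B _ => hg B)) big_split /=; congr (_ * _).
rewrite prodrXr; congr (_ ^+ _).
rewrite -(set_partition_big _ hP).
by apply: eq_bigl => j; rewrite inE.
Qed.

Lemma single_orbit m (s : 'S_m) (A : {set 'I_m}) x0 :
  x0 \in A -> (forall x, x \notin A -> s x = x) -> A \subset porbit s x0 ->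
  is_cycle_of_length s #|A|.
Proof.
move=> x0A hfix sub k k1.
have stab : forall z, z \in A -> s z \in A.
  move=> z zA; apply: contraT => szA.
  have : s (s z) = s z by apply: hfix.
  by move/perm_inj => h; move: szA; rewrite h zA.
have eqA : porbit s x0 = A.
  apply/eqP; rewrite eqEsubset sub andbT; apply/subsetP => y /porbitP [i ->].
  rewrite permX; elim: i => //= i IH; exact: stab.
rewrite /ctype.
case: (eqVneq k #|A|) => [hk|hk].
  rewrite (_ : [set X in porbits s | #|X| == k] = [set A]) ?cards1 //.
  apply/setP => X; rewrite !inE; apply/andP/eqP => [[XP /eqP Xk]|->].
    have X1 : #|X| != 1%N by rewrite Xk; case: k k1 {hk Xk} => [|[|]].
    have [x xs ->] := porbits_moved XP X1.
    have xA : x \in A.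
      apply: contraT => xA; move: xs; rewrite psuppP hfix //.
      by rewrite eqxx.
    by rewrite -eqA; apply/eqP; rewrite eq_porbit_mem eqA.
  by split; [rewrite -eqA; apply: imset_f | rewrite hk].
apply/eqP; rewrite cards_eq0; apply/eqP/setP => X; rewrite !inE.
apply/negbTE/negP => /andP[XP /eqP Xk].
have X1 : #|X| != 1%N by rewrite Xk; case: k k1 {hk Xk} => [|[|]].
have [x xs eX] := porbits_moved XP X1.
have xA : x \in A.
  apply: contraT => xA; move: xs; rewrite psuppP hfix //.
  by rewrite eqxx.
have : X = A by rewrite eX -eqA; apply/eqP; rewrite eq_porbit_mem eqA.
by move=> h; move: hk; rewrite -Xk h eqxx.
Qed.

Definition rot (o l x : nat) : nat :=
  if (o <= x < o + l)%N then (o + (x - o).+1 %% l)%N else x.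

Lemma rot_in o l x : (o <= x < o + l)%N -> (o <= rot o l x < o + l)%N.
Proof.
move=> hx; rewrite /rot hx leq_addr /= ltn_add2l ltn_pmod //.
by move: hx => /andP[h1 h2]; lia.
Qed.

Lemma rot_out o l x : ~~ (o <= x < o + l)%N -> rot o l x = x.
Proof. by rewrite /rot => /negbTE ->. Qed.

Lemma rot_inj o l : injective (rot o l).
Proof.
move=> x y.
case hx: (o <= x < o + l)%N; case hy: (o <= y < o + l)%N.
- rewrite /rot hx hy => /addnI.
  have hm : forall u, (u < l)%N -> (u.+1 %% l = if u.+1 == l then 0 else u.+1)%N.
    move=> u ul; case: eqP => [->|ne]; first by rewrite modnn.
    by rewrite modn_small //; lia.
  move: hx hy => /andP[x1 x2] /andP[y1 y2].
  rewrite !hm; [|lia|lia].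
  case: eqP => ex; case: eqP => ey; lia.
- by move=> e; have := rot_in hx; rewrite e rot_out ?hy.
- by move=> e; have := rot_in hy; rewrite -e rot_out ?hx.
- by rewrite !rot_out ?hx ?hy.
Qed.

Lemma rot_lt o l m x : (o + l <= m)%N -> (x < m)%N -> (rot o l x < m)%N.
Proof.
move=> h xm; case hx: (o <= x < o + l)%N.
  by have := rot_in hx; lia.
by rewrite rot_out ?hx.
Qed.

Lemma iter_rot o l i : (0 < l)%N -> iter i (rot o l) o = (o + i %% l)%N.
Proof.
move=> l0; elim: i => [|i IH] /=; first by rewrite mod0n addn0.
rewrite IH /rot leq_addr /= ltn_add2l ltn_pmod //= addKn.
by rewrite -addn1 modnDml addn1.
Qed.

Definition rotf m o l (x : 'I_m) : 'I_m := insubd x (rot o l x).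

Lemma val_rotf m o l (h : (o + l <= m)%N) (x : 'I_m) : val (rotf o l x) = rot o l x.
Proof. by rewrite /rotf insubdK //; apply: rot_lt h (ltn_ord x). Qed.

Lemma rotf_inj m o l (h : (o + l <= m)%N) : injective (@rotf m o l).
Proof.
by move=> x y e; apply: val_inj; apply: (@rot_inj o l); rewrite -!(val_rotf h) e.
Qed.

Definition rotp m o l (h : (o + l <= m)%N) : 'S_m := perm (rotf_inj h).

Lemma rotpE m o l (h : (o + l <= m)%N) (x : 'I_m) : val (rotp h x) = rot o l x.
Proof. by rewrite /rotp permE val_rotf. Qed.

Lemma rotp_fix m o l (h : (o + l <= m)%N) (x : 'I_m) :
  ~~ (o <= x < o + l)%N -> rotp h x = x.
Proof. by move=> hx; apply: val_inj; rewrite rotpE rot_out. Qed.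

Lemma rotp_cycle m o l (h : (o + l <= m)%N) (l0 : (0 < l)%N) :
  is_cycle_of_length (rotp h) l.
Proof.
have om : (o < m)%N by lia.
pose x0 : 'I_m := Ordinal om.
pose A := [set x : 'I_m | (o <= x < o + l)%N].
have hiter : forall i, val (iter i (rotp h) x0) = iter i (rot o l) o.
  by elim=> [|i IH] //=; rewrite rotpE IH.
have cardA : #|A| = l.
  pose f (i : 'I_l) : 'I_m := insubd x0 (o + i)%N.
  have vf : forall i : 'I_l, val (f i) = (o + i)%N.
    move=> i; have hi : (o + i < m)%N by have := ltn_ord i; lia.
    by rewrite /f insubdK //; exact: hi.
  have -> : A = f @: setT.
    apply/setP => y; rewrite !inE; apply/idP/imsetP.
      move=> /andP[y1 y2]; have yl : (y - o < l)%N by lia.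
      by exists (Ordinal yl) => //; apply: val_inj; rewrite vf /=; lia.
    by move=> [i _ ->]; rewrite vf; have := ltn_ord i; lia.
  rewrite card_imset ?cardsT ?card_ord //.
  by move=> i j e; apply: val_inj; move: (congr1 val e); rewrite !vf => /addnI.
rewrite -[X in is_cycle_of_length _ X]cardA; apply: (@single_orbit _ _ _ x0).
- by rewrite inE /= leqnn /=; lia.
- by move=> x; rewrite inE => /rotp_fix.
- apply/subsetP => y; rewrite inE => /andP[y1 y2]; apply/porbitP.
  exists (y - o)%N; rewrite permX; apply: val_inj.
  rewrite hiter iter_rot // modn_small ?subnKC //; lia.
Qed.

Lemma psupp_rotp m o l (h : (o + l <= m)%N) (x : 'I_m) :
  x \in psupp (rotp h) -> (o <= x < o + l)%N.
Proof. by rewrite psuppP; apply: contraR => /rotp_fix ->. Qed.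

Lemma exists_cycles r (L : 'I_r -> nat) (hL : forall j, (0 < L j)%N) :
  exists m, exists s : 'I_r -> 'S_m,
   (forall j, is_cycle_of_length (s j) (L j)) /\
   (forall i j, i != j -> disjoint_supp (s i) (s j)).
Proof.
pose m := (\sum_(j < r) L j)%N.
pose o (j : 'I_r) := (\sum_(i < r | (i < j)%N) L i)%N.
have ho : forall j, (o j + L j <= m)%N.
  move=> j; rewrite /o /m [X in (_ <= X)%N](bigD1 j) //= addnC leq_add2l.
  rewrite [X in (_ <= X)%N]big_mkcond [X in (X <= _)%N]big_mkcond /=.
  apply: leq_sum => i _; case: (ltnP i j) => hij //=.
  rewrite ifT //; apply: contraTneq hij => ->; by rewrite ltnn.
have hoo : forall i j : 'I_r, (i < j)%N -> (o i + L i <= o j)%N.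
  move=> i j hij; rewrite /o [X in (_ <= X)%N](bigD1 i) //= addnC leq_add2l.
  rewrite [X in (_ <= X)%N]big_mkcond [X in (X <= _)%N]big_mkcond /=.
  apply: leq_sum => i' _; case: (ltnP i' i) => hi //=.
  rewrite ifT //; apply/andP; split; first exact: ltn_trans hi hij.
  apply: contraTneq hi => ->; by rewrite ltnn.
exists m, (fun j => rotp (ho j)); split.
  by move=> j; apply: rotp_cycle.
move=> i j ij; rewrite /disjoint_supp disjoints_subset; apply/subsetP => x xi.
rewrite inE; apply/negP => xj.
have := psupp_rotp xi; have := psupp_rotp xj.
case: (ltngtP i j) => [hij|hij|e].
- by have := hoo _ _ hij; lia.
- by have := hoo _ _ hij; lia.
- by move: ij; rewrite (ord_inj e) eqxx.
Qed.

Lemma exists_coloring K (a : 'X_{1..K}) :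
  exists c : 'I_(mdeg a) -> 'I_K, tc c setT = a.
Proof.
case: K a => [|K] a.
  have h0 : mdeg a = 0%N by rewrite mdegE big_ord0.
  have f : 'I_(mdeg a) -> 'I_0 by rewrite h0; apply.
  by exists f; apply/mnmP => -[].
pose Ls := flatten [seq nseq (a i) i | i <- enum 'I_K.+1].
have sz : size Ls = mdeg a.
  rewrite /Ls size_flatten /shape -map_comp mdegE sumnE big_map.
  by rewrite big_enum /=; apply: eq_bigr => i _; rewrite /= size_nseq.
exists (fun j => seq.nth ord0 Ls j); apply/mnmP => i; rewrite tcE.
rewrite -sum1_card (eq_bigl (fun j : 'I_(mdeg a) => seq.nth ord0 Ls j == i)); last first.
  by move=> j; rewrite !inE.
rewrite -(big_mkord (fun j => seq.nth ord0 Ls j == i) (fun _ => 1%N)) -sz.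
rewrite -(big_nth ord0 (fun x => x == i) (fun _ => 1%N)) sum1_count.
rewrite count_flatten -map_comp sumnE big_map big_enum /=.
rewrite (bigD1 i) //= count_nseq /= eqxx mul1n big1 ?addn0 // => i' ne.
by rewrite count_nseq /= (negbTE ne).
Qed.

Lemma partition_I1 (P : {set {set 'I_1}}) : partition P setT = (P == [set setT]).
Proof.
have T0 : ([set: 'I_1] == set0) = false.
  by apply/negbTE/set0Pn; exists ord0; rewrite inE.
apply/idP/eqP => [hP|->]; last first.
  by rewrite /partition cover1 trivIset1 inE eq_sym T0 eqxx.
have hB : forall B, B \in P -> B = setT.
  move=> B BP; have := partition_neq0 hP BP => /set0Pn [y yB].
  apply/setP => x; rewrite inE; by rewrite (ord1 x) -(ord1 y).
have [B0 B0P] : exists B0, B0 \in P.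
  apply/set0Pn; apply: contraFN T0 => /eqP P0.
  by rewrite -(cover_partition hP) P0 /cover big_set0.
apply/setP => B; rewrite inE; apply/idP/eqP => [/hB //|->].
by rewrite -(hB _ B0P).
Qed.

Lemma kappa_r1 (R : realType) n (rho : Iirr [set: 'S_n]%G -> R) m (s : 'I_1 -> 'S_m) :
  kappa rho s = Mrho rho (s ord0).
Proof.
rewrite /kappa (big_pred1 [set setT]); last by move=> P; rewrite partition_I1.
rewrite cards1 /= expr0 fact0 !mul1r big_set1.
rewrite (big_pred1 ord0) // => j; rewrite inE.
by rewrite /= (ord1 j).
Qed.

Lemma first_order (R : realType) n (rho : Iirr [set: 'S_n]%G -> R) (hp : prob_on rho)
  k m (u : 'S_m) (hu : is_cycle_of_length u k.+1) :
  dlogA rho (mnm1 (@ord_max k)) = Num.sqrt (n%:R : R) ^+ perm_length u * Mrho rho u.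
Proof.
have := @core_identity R n rho hp 1 (ltn0Sn 0) m (fun _ => u) k.+1
  (fun _ => @ord_max k) (fun _ => hu).
have htc : tc (fun _ : 'I_1 => @ord_max k) setT = mnm1 (@ord_max k).
  apply/mnmP => i; rewrite tcE mnm1E.
  case: (eqVneq ord_max i) => _.
    rewrite (_ : [set j in [set: 'I_1] | true] = setT) ?cardsT ?card_ord //.
    by apply/setP => j; rewrite !inE.
  by apply/eqP; rewrite cards_eq0; apply/eqP/setP => j; rewrite !inE.
rewrite htc big_ord1 kappa_r1; apply.
by move=> i j; rewrite (ord1 i) (ord1 j) eqxx.
Qed.

Local Open Scope classical_set_scope.
Local Open Scope ring_scope.

Lemma cvg_eventually (R : realType) (f g : nat -> R) (l : R) :
  (forall n, (0 < n)%N -> f n = g n) -> g @ \oo --> l -> f @ \oo --> l.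
Proof.
move=> e hg; apply: (cvg_trans _ hg); apply: near_eq_cvg.
exists 1%N => // n /= hn; by rewrite e.
Qed.

Theorem mainTheorem10 (R : realType)
  (rho : forall n : nat, Iirr [set: 'S_n]%G -> R)
  (hrho : forall n : nat, (0 < n)%N -> prob_on (rho n)) :
  LLN_appropriate rho <->
  exists c : nat -> R,
    (forall (k : nat), (0 < k)%N ->
       forall (m : nat) (s : 'S_m), is_cycle_of_length s k ->
       (fun n => Num.sqrt (n%:R : R) ^+ perm_length s * Mrho (rho n) s)
         @ \oo --> (c k : R))
    /\
    (forall (r : nat), (2 <= r)%N ->
       forall (m : nat) (s : 'I_r -> 'S_m),
       (forall j, exists2 k, (0 < k)%N & is_cycle_of_length (s j) k) ->
       (forall i j, i != j -> disjoint_supp (s i) (s j)) ->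
       (fun n => Num.sqrt (n%:R : R) ^+ (\sum_j perm_length (s j))
                 * kappa (rho n) s) @ \oo --> (0 : R)).
Proof.
split.
- move=> [[c hc1] h2]; exists c; split.
    move=> [//|k] _ m s hs.
    apply: (cvg_eventually _ (hc1 k)) => n n0.
    by rewrite (first_order (hrho n n0) hs).
  move=> r r2 m s hcyc hdis.
  have hcyc' : forall j, exists k, (0 < k)%N /\ is_cycle_of_length (s j) k.
    by move=> j; have [k k0 hk] := hcyc j; exists k.
  have [L hL] := choice hcyc'.
  have Lm : forall j, ((L j).-1 < m.+1)%N.
    move=> j; have [L0 hLj] := hL j.
    case: (ltnP 1 (L j)) => L1; last by lia.
    case: (leqP (L j) m) => Lm; first by lia.
    by move: (hLj _ L1); rewrite ctype_big // eqxx.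
  pose cc (j : 'I_r) : 'I_m.+1 := Ordinal (Lm j).
  have hc : forall j, is_cycle_of_length (s j) (cc j).+1.
    by move=> j; have [L0 hLj] := hL j; rewrite /= prednK.
  have r0 : (0 < r)%N by lia.
  apply: (cvg_eventually (g := fun n => dlogA (rho n) (tc cc setT))).
    by move=> n n0; rewrite (core_identity (hrho n n0) r0 hc hdis).
  by apply: h2; rewrite mdeg_tc cardsT card_ord.
move=> [c [h1 h2]]; split.
  exists c => k.
  have [m [s [hs _]]] := @exists_cycles 1 (fun _ => k.+1) (fun _ => ltn0Sn k).
  apply: (cvg_eventually _ (h1 k.+1 (ltn0Sn k) m (s ord0) (hs ord0))) => n n0.
  by rewrite (first_order (hrho n n0) (hs ord0)).
move=> K a ha.
have [c' hc'] := exists_coloring a.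
have [m [s [hs hdis]]] := @exists_cycles (mdeg a) (fun j => (c' j).+1) (fun j => ltn0Sn _).
have hcyc : forall j, exists2 k, (0 < k)%N & is_cycle_of_length (s j) k.
  by move=> j; exists (c' j).+1.
have r0 : (0 < mdeg a)%N by lia.
rewrite -hc'; apply: (cvg_eventually _ (h2 (mdeg a) ha m s hcyc hdis)) => n n0.
by rewrite (core_identity (hrho n n0) r0 hs hdis).
Qed.
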